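(* For the population protocol USD and every $t\ge1$: (1) $\mathbb E_{t-1}[\gamma_t]=\gamma_{t-1}+\frac2n\big((1-2\beta_{t-1})\gamma_{t-1}+\|\alpha_{t-1}\|_3^3\big)+\frac{\beta_{t-1}-\gamma_{t-1}}{n^2}$. (2) $\mathrm{Var}_{t-1}[\gamma_t]\le\frac{9\|\alpha_{t-1}\|_3^3}{n^2}$. (3) Conditioned on $\mathcal F_{t-1}$, $\gamma_t-\mathbb E_{t-1}[\gamma_t]$ satisfies the $\big(\frac{8\alpha^{\max}_{t-1}}{n},\frac{9\|\alpha_{t-1}\|_3^3}{n^2}\big)$-Bernstein condition.
   Context: Vertex set $V$, $|V|=n$; opinions in $\Sigma=[k]\cup\{\bot\}$ ($\bot$ = undecided). USD update rule: $\mathsf{update}(\sigma_1,\sigma_2)=\bot$ if $\sigma_1,\sigma_2\in[k]$ and $\sigma_1\ne\sigma_2$; $=\sigma_2$ if $\sigma_1=\bot$; $=\sigma_1$ otherwise. Population protocol USD: given $\mathrm{opn}_t\in\Sigma^V$, an ordered pair $(u,v)$ is chosen uniformly from $V\times V$ (with replacement), $\mathrm{opn}_{t+1}(u)=\mathsf{update}(\mathrm{opn}_t(u),\mathrm{opn}_t(v))$, and all other vertices keep their opinions. Notation: $\alpha_t(i)=|\{u:\mathrm{opn}_t(u)=i\}|/n$, $\beta_t=\sum_{i\in[k]}\alpha_t(i)$, $\gamma_t=\sum_{i\in[k]}\alpha_t(i)^2$, $\|\alpha_t\|_3^3=\sum_{i\in[k]}\alpha_t(i)^3$, $\alpha^{\max}_t=\max_{i\in[k]}\alpha_t(i)$.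 $(\mathcal F_t)$ is the natural filtration; $\mathbb E_{t-1},\mathrm{Var}_{t-1}$ are conditional on $\mathcal F_{t-1}$. Bernstein condition: for $D,s\ge0$, $X$ satisfies the $(D,s)$-Bernstein condition if $\mathbb E[e^{\lambda X}]\le\exp\!\big(\frac{\lambda^2 s/2}{1-|\lambda|D/3}\big)$ for all real $\lambda$ with $|\lambda|D<3$. Conditioned on $\mathcal F_{t-1}$: the same with $\mathbb E_{t-1}$, almost surely. *)

(* Defs.v *)
From mathcomp Require Import all_boot all_order all_algebra.
From mathcomp Require Import reals sequences exp.
Set Implicit Arguments. Unset Strict Implicit. Unset Printing Implicit Defensive.
Import Order.TTheory GRing.Theory Num.Theory.
Local Open Scope ring_scope.

(* Opinions: Sigma = [k] ∪ {⊥} is rendered as option 'I_k, None = ⊥. *)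
Definition opinion (k : nat) := option 'I_k.

Definition update (k : nat) (s1 s2 : opinion k) : opinion k :=
  match s1, s2 with
  | Some i, Some j => if i == j then Some i else None
  | None, _ => s2
  | Some i, None => Some i
  end.

Definition step (V : finType) (k : nat) (opn : {ffun V -> opinion k}) (u v : V)
  : {ffun V -> opinion k} :=
  [ffun w => if w == u then update (opn u) (opn v) else opn w].

Section Quantities.
Variables (R : realType) (V : finType) (k : nat).
Implicit Types (opn : {ffun V -> opinion k}).

Definition nV : R := #|V|%:R.

Definition alpha opn (i : 'I_k) : R := #|[set u | opn u == Some i]|%:R / nV.
Definition beta opn : R := \sum_(i < k) alpha opn i.
Definition gamma opn : R := \sum_(i < k) alpha opn i ^+ 2.
Definition norm3cube opn : R := \sum_(i < k) alpha opn i ^+ 3.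
Definition alpha_max opn : R := \big[Num.max/0]_(i < k) alpha opn i.

(* Conditional expectation E_{t-1}[f(opn_t)] given opn_{t-1} = opn:
   (u,v) uniform on V x V. *)
Definition Estep opn (f : {ffun V -> opinion k} -> R) : R :=
  (nV ^+ 2)^-1 * \sum_(u : V) \sum_(v : V) f (step opn u v).

Definition Varstep opn (f : {ffun V -> opinion k} -> R) : R :=
  Estep opn (fun c => (f c - Estep opn f) ^+ 2).

Definition bernstein_step opn (X : {ffun V -> opinion k} -> R) (D s : R) : Prop :=
  forall lam : R, `|lam| * D < 3 ->
    Estep opn (fun c => expR (lam * X c))
      <= expR ((lam ^+ 2 * s / 2) / (1 - `|lam| * D / 3)).

End Quantities.

(* Main.v *)
Require Import Defs.
From mathcomp Require Import all_boot all_order all_algebra.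
From mathcomp Require Import reals sequences exp.
From mathcomp Require Import boolp classical_sets topology normedtype.
From mathcomp Require Import ring lra.
Import Order.TTheory GRing.Theory Num.Theory.
Local Open Scope ring_scope.

Lemma fact_ge (j : nat) : (2 * 3 ^ j <= (j.+2)`!)%N.
Proof.
elim: j => [|j IH]; first by [].
rewrite factS expnS mulnCA; apply: leq_mul => //.
Qed.

Lemma geom_le (R : realFieldType) (q : R) (m : nat) : 0 <= q < 1 ->
  \sum_(j < m) q ^+ j <= (1 - q)^-1.
Proof.
move=> /andP[q0 q1].
have h : 0 < 1 - q by rewrite subr_gt0.
rewrite -(ler_pM2l h) mulfV ?gt_eqF // -opprB mulNr -subrX1 opprB lerBlDr lerDl.
exact: exprn_ge0.
Qed.

Lemma expR_bound (R : realType) (y : R) : `|y| < 3 ->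
  expR y <= 1 + y + y ^+ 2 / (2 * (1 - `|y| / 3)).
Proof.
move=> y3.
set q := `|y| / 3.
have q0 : 0 <= q by rewrite /q divr_ge0.
have q1 : q < 1 by rewrite /q ltr_pdivrMr // mul1r.
rewrite /expR; apply: limr_le; first exact: is_cvg_series_exp_coeff.
near=> m.
have -> : m = (m - 2).+2 by rewrite -addn2 subnK //; near: m; exists 2%N.
rewrite /series /= big_nat_recl // big_nat_recl //.
rewrite /exp_coeff /= expr0 expr1 fact0 factS fact0 !divr1 addrA lerD2l.
apply: (@le_trans _ _ (\sum_(0 <= j < m - 2) (y ^+ 2 / 2) * q ^+ j)).
  apply: ler_sum => j _.
  have hf : (2 * 3 ^+ j : R) <= (j.+2)`!%:R.
    by rewrite -(natrX R 3 j) -natrM ler_nat fact_ge.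
  have p0 : (0 : R) < 2 * 3 ^+ j by rewrite mulr_gt0 // exprn_gt0.
  apply: (@le_trans _ _ (`|y| ^+ j.+2 / (j.+2)`!%:R)).
    apply: ler_wpM2r; first by rewrite invr_ge0.
    by rewrite -normrX ler_norm.
  apply: (@le_trans _ _ (`|y| ^+ j.+2 / (2 * 3 ^+ j))).
    apply: ler_wpM2l; first exact: exprn_ge0.
    by rewrite lef_pV2 // posrE (lt_le_trans p0 hf).
  rewrite /q expr_div_n -[j.+2]addn2 exprD -normrX real_normK ?num_real //.
  rewrite le_eqVlt; apply/orP; left; apply/eqP; field.
  by rewrite gt_eqF // exprn_gt0.
rewrite -big_distrr /= big_mkord invfM mulrA ler_wpM2l //.
  by rewrite divr_ge0 // sqr_ge0.
by apply: geom_le; rewrite q0 q1.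
Unshelve. all: by end_near.
Qed.

Section Comb.
Variables (R : realType) (V : finType) (k : nat).

Definition ee (i : 'I_k) (o : opinion k) : R := (o == Some i)%:R.
Definition ss (o : opinion k) : R := (o != None)%:R.
Definition dl (i : 'I_k) (o1 o2 : opinion k) : R := ee i (update o1 o2) - ee i o1.

Lemma sum_ee o : \sum_i ee i o = ss o.
Proof.
case: o => [a|]; rewrite /ss /=.
  rewrite (bigD1 a) //= big1 ?addr0; first by rewrite /ee eqxx.
  by move=> i ia; rewrite /ee; case: eqP => // -[] /esym /eqP; rewrite (negbTE ia).
by rewrite big1 // => i _; rewrite /ee.
Qed.

Lemma dl_eq i o1 o2 :
  dl i o1 o2 = - (ee i o1 * (ss o2 - ee i o2)) + (1 - ss o1) * ee i o2.
Proof.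
rewrite /dl /ee /ss /update.
have E : forall x y : 'I_k, (Some x == Some y) = (x == y).
  by move=> x y; apply/eqP/eqP => [[]|->].
case: o1 => [a|]; case: o2 => [b|] /=.
- case: (eqVneq a i) => [->|ai]; case: (eqVneq b i) => [->|bi].
  all: rewrite ?E ?eqxx ?(negbTE ai) ?(negbTE bi) /=; try ring.
  case: (eqVneq a b) => [ab|ab]; rewrite ?ab ?E ?eqxx ?(negbTE ai) ?(negbTE bi) /=; ring.
all: rewrite ?E /=; try (case: eqP => _ /=); ring.
Qed.

Lemma dl2_eq i o1 o2 :
  dl i o1 o2 ^+ 2 = ee i o1 * (ss o2 - ee i o2) + (1 - ss o1) * ee i o2.
Proof.
rewrite /dl /ee /ss /update.
have E : forall x y : 'I_k, (Some x == Some y) = (x == y).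
  by move=> x y; apply/eqP/eqP => [[]|->].
case: o1 => [a|]; case: o2 => [b|] /=.
- case: (eqVneq a i) => [->|ai]; case: (eqVneq b i) => [->|bi].
  all: rewrite ?E ?eqxx ?(negbTE ai) ?(negbTE bi) /=; try ring.
  case: (eqVneq a b) => [ab|ab]; rewrite ?ab ?E ?eqxx ?(negbTE ai) ?(negbTE bi) /=; ring.
all: rewrite ?E /=; try (case: eqP => _ /=); ring.
Qed.

Variable opn : {ffun V -> opinion k}.
Hypothesis hV : (0 < #|V|)%N.
Local Notation n := (nV R V).

Lemma n_gt0 : 0 < n.
Proof. by rewrite /nV ltr0n. Qed.
Lemma n_neq0 : n != 0.
Proof. by rewrite gt_eqF // n_gt0. Qed.

Lemma card_sum (P : pred V) : (#|[set u | P u]|%:R : R) = \sum_u (P u)%:R.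
Proof.
rewrite -sum1_card natr_sum big_mkcond /=; apply: eq_bigr => u _.
by rewrite inE; case: (P u).
Qed.

Lemma card_step i u v :
  (#|[set w | step opn u v w == Some i]|%:R : R) =
  #|[set w | opn w == Some i]|%:R + dl i (opn u) (opn v).
Proof.
rewrite (cardsD1 u [set w | step opn u v w == Some i]).
rewrite (cardsD1 u [set w | opn w == Some i]).
have -> : [set w | step opn u v w == Some i] :\ u = [set w | opn w == Some i] :\ u.
  by apply/setP => w; rewrite !inE ffunE; case: eqP.
rewrite !inE ffunE eqxx /dl /ee !natrD; ring.
Qed.

Lemma alpha_step i u v :
  alpha R (step opn u v) i = alpha R opn i + dl i (opn u) (opn v) / n.
Proof. by rewrite /alpha card_step mulrDl. Qed.

Lemma gamma_step u v :
  gamma R (step opn u v) = \sum_i (alpha R opn i + dl i (opn u) (opn v) / n) ^+ 2.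
Proof. by apply: eq_bigr => i _; rewrite alpha_step. Qed.

Lemma sum_ee_opn i : \sum_u ee i (opn u) = n * alpha R opn i.
Proof.
rewrite /alpha mulrC mulfVK ?n_neq0 // card_sum.
by apply: eq_bigr => u _.
Qed.

Lemma sum_ss_opn : \sum_u ss (opn u) = n * beta R opn.
Proof.
under eq_bigr do rewrite -sum_ee.
rewrite exchange_big /beta mulr_sumr; apply: eq_bigr => i _.
exact: sum_ee_opn.
Qed.

Lemma sum_one : \sum_(u : V) (1 : R) = n.
Proof. by rewrite sumr_const /nV. Qed.

Lemma sum_prod (f g : V -> R) :
  \sum_u \sum_v f u * g v = (\sum_u f u) * (\sum_v g v).
Proof. by rewrite big_distrl; apply: eq_bigr => u _; rewrite big_distrr. Qed.

Lemma sum2_lin (f1 g1 f2 g2 : V -> R) (c1 c2 : R) :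
  \sum_u \sum_v (c1 * (f1 u * g1 v) + c2 * (f2 u * g2 v)) =
  c1 * ((\sum_u f1 u) * (\sum_v g1 v)) + c2 * ((\sum_u f2 u) * (\sum_v g2 v)).
Proof.
rewrite -!sum_prod !mulr_sumr -big_split; apply: eq_bigr => u _.
by rewrite !mulr_sumr -big_split.
Qed.

Lemma sum_dl i : \sum_u \sum_v dl i (opn u) (opn v) =
  n ^+ 2 * (alpha R opn i - 2 * alpha R opn i * beta R opn + alpha R opn i ^+ 2).
Proof.
under eq_bigr do under eq_bigr do rewrite dl_eq -mulN1r -[X in _ + X]mul1r.
rewrite sum2_lin sumrB sumrB sum_one sum_ss_opn sum_ee_opn; ring.
Qed.

Lemma sum_dl2 i : \sum_u \sum_v dl i (opn u) (opn v) ^+ 2 =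
  n ^+ 2 * (alpha R opn i - alpha R opn i ^+ 2).
Proof.
under eq_bigr do under eq_bigr do rewrite dl2_eq -[X in X + _]mul1r -[X in _ + X]mul1r.
rewrite sum2_lin sumrB sumrB sum_one sum_ss_opn sum_ee_opn; ring.
Qed.

Local Notation cfg := {ffun V -> opinion k}.

Lemma Estep_ext (f h : cfg -> R) :
  (forall u v, f (step opn u v) = h (step opn u v)) -> Estep opn f = Estep opn h.
Proof.
move=> H; rewrite /Estep; congr (_ * _); apply: eq_bigr => u _.
by apply: eq_bigr => v _; rewrite H.
Qed.

Lemma Estep_le (f h : cfg -> R) :
  (forall u v, f (step opn u v) <= h (step opn u v)) -> Estep opn f <= Estep opn h.
Proof.
move=> H; rewrite /Estep; apply: ler_wpM2l; first by rewrite invr_ge0 exprn_ge0 // ltW // n_gt0.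
by apply: ler_sum => u _; apply: ler_sum => v _.
Qed.

Lemma Estep_lin (f h : cfg -> R) a b c :
  Estep opn (fun x => a * f x + b * h x + c) = a * Estep opn f + b * Estep opn h + c.
Proof.
rewrite /Estep.
under eq_bigr do rewrite big_split /= big_split /= -mulr_sumr -mulr_sumr sumr_const.
rewrite big_split /= big_split /= -!mulr_sumr sumr_const -mulr_natr -/(nV R V).
have hn := n_neq0.
rewrite -mulr_natr -/(nV R V); field.
exact: hn.
Qed.

Lemma Estep_var_le (f : cfg -> R) c :
  Estep opn (fun x => (f x - Estep opn f) ^+ 2) <= Estep opn (fun x => (f x - c) ^+ 2).
Proof.
set m := Estep opn f.
rewrite (@Estep_ext (fun x => (f x - c) ^+ 2)
   (fun x => 1 * (f x - m) ^+ 2 + (2 * (m - c)) * f x + ((m - c) ^+ 2 - 2 * (m - c) * m))); last first.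
  by move=> u v; ring.
rewrite Estep_lin -/m.
have -> : 1 * Estep opn (fun x => (f x - m) ^+ 2) + 2 * (m - c) * m + ((m - c) ^+ 2 - 2 * (m - c) * m)
  = Estep opn (fun x => (f x - m) ^+ 2) + (m - c) ^+ 2 by ring.
by rewrite lerDl sqr_ge0.
Qed.

Lemma sum_cst (x : R) : \sum_(u : V) x = x * n.
Proof. by rewrite sumr_const -mulr_natr. Qed.

Lemma sum2_aff (F G : V -> V -> R) a b c :
  \sum_u \sum_v (a + b * F u v + c * G u v) =
  n ^+ 2 * a + b * (\sum_u \sum_v F u v) + c * (\sum_u \sum_v G u v).
Proof.
under eq_bigr do rewrite big_split /= big_split /= -mulr_sumr -mulr_sumr sum_cst.
rewrite big_split /= big_split /= -mulr_sumr -mulr_sumr sum_cst.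
rewrite -mulr_sumr; ring.
Qed.

Lemma sq_expand (x d : R) :
  (x + d / n) ^+ 2 = x ^+ 2 + (2 * x / n) * d + (n ^+ 2)^-1 * d ^+ 2.
Proof. by have hn := n_neq0; field. Qed.

Lemma Estep_gamma :
  Estep opn (fun c => gamma R c) =
  gamma R opn + 2 / n * ((1 - 2 * beta R opn) * gamma R opn + norm3cube R opn)
  + (beta R opn - gamma R opn) / n ^+ 2.
Proof.
rewrite /Estep.
under eq_bigr do under eq_bigr do rewrite gamma_step.
under eq_bigr do rewrite exchange_big.
rewrite exchange_big mulr_sumr.
set b := beta R opn.
have hn := n_neq0.
rewrite (@eq_bigr _ _ _ _ _ _ _ (fun i => alpha R opn i ^+ 2 + 2 / n * ((1 - 2 * b) * alpha R opn i ^+ 2 + alpha R opn i ^+ 3) + (alpha R opn i - alpha R opn i ^+ 2) / n ^+ 2)); last first.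
  move=> i _.
  under eq_bigr do under eq_bigr do rewrite sq_expand.
  rewrite sum2_aff sum_dl sum_dl2 -/b; field.
  exact: hn.
rewrite big_split /= big_split /= -mulr_sumr -mulr_suml big_split /= -mulr_sumr sumrB.
by rewrite /gamma /norm3cube /b /beta.
Qed.

Lemma dl_struct o1 o2 :
  (forall i, dl i o1 o2 = 0) \/
  exists a (eps : R), [/\ eps = 1 \/ eps = -1,
     (forall i, dl i o1 o2 = eps * (i == a)%:R) & (o1 = Some a \/ o2 = Some a)].
Proof.
have E : forall x y : 'I_k, (Some x == Some y) = (y == x).
  by move=> x y; apply/eqP/eqP => [[]|->].
case: o1 => [a|]; case: o2 => [b|].
- case: (eqVneq a b) => [<-|ab].
    by left => i; rewrite /dl /update eqxx subrr.
  right; exists a, (-1); split => //; first by right.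
    by move=> i; rewrite /dl /update (negbTE ab) /ee E /=; ring.
  by left.
- by left => i; rewrite /dl /update subrr.
- right; exists b, 1; split => //; first by left.
    by move=> i; rewrite /dl /update /ee E /=; ring.
  by right.
- by left => i; rewrite /dl /update subrr.
Qed.

Lemma alpha_ge_of u a : opn u = Some a -> n^-1 <= alpha R opn a.
Proof.
move=> H; rewrite /alpha -[X in X <= _]mul1r ler_wpM2r //.
  by rewrite invr_ge0 ltW // n_gt0.
rewrite (cardsD1 u) inE H eqxx natrD lerDl //.
Qed.

Lemma alpha_max_ge a : alpha R opn a <= alpha_max R opn.
Proof. exact: le_bigmax. Qed.

Lemma alpha_ge0 i : 0 <= alpha R opn i.
Proof. by rewrite /alpha divr_ge0 // ltW // n_gt0. Qed.

Lemma alpha_max_ge0 : 0 <= alpha_max R opn.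
Proof.
rewrite /alpha_max; apply: (@big_ind R (fun x => 0 <= x)) => //.
- by move=> x y hx hy; rewrite le_max hx.
- by move=> i _; apply: alpha_ge0.
Qed.

Lemma D_eq u v : gamma R (step opn u v) - gamma R opn =
  \sum_i (2 * alpha R opn i * n^-1 * dl i (opn u) (opn v) + n^-1 ^+ 2 * dl i (opn u) (opn v) ^+ 2).
Proof.
rewrite gamma_step /gamma -sumrB; apply: eq_bigr => i _.
by have hn := n_neq0; field.
Qed.

Lemma D_point u v :
  (gamma R (step opn u v) - gamma R opn) ^+ 2 <=
     \sum_i dl i (opn u) (opn v) ^+ 2 * (9 * alpha R opn i ^+ 2 / n ^+ 2) /\
  `|gamma R (step opn u v) - gamma R opn| <= 3 * alpha_max R opn / n.
Proof.
rewrite D_eq.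
have h0 : 0 < n^-1 by rewrite invr_gt0 n_gt0.
have am0 := alpha_max_ge0.
case: (dl_struct (opn u) (opn v)) => [Z|[a [eps [heps Hd Ha]]]].
  rewrite !big1 => [|i _|i _]; rewrite ?Z; last 2 first.
  - by rewrite expr0n mul0r.
  - by rewrite !mulr0 expr0n mulr0 addr0.
  split; first by rewrite expr0n /= lexx.
  by rewrite normr0; apply: divr_ge0; [apply: mulr_ge0 | apply: ltW; apply: n_gt0].
have E1 : \sum_i (2 * alpha R opn i * n^-1 * dl i (opn u) (opn v) + n^-1 ^+ 2 * dl i (opn u) (opn v) ^+ 2)
   = 2 * alpha R opn a * n^-1 * eps + n^-1 ^+ 2 * eps ^+ 2.
  rewrite (bigD1 a) //= big1 ?addr0; first by rewrite Hd eqxx mulr1.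
  by move=> i ia; rewrite Hd (negbTE ia) !mulr0 expr0n mulr0 addr0.
have E2 : \sum_i dl i (opn u) (opn v) ^+ 2 * (9 * alpha R opn i ^+ 2 / n ^+ 2)
   = eps ^+ 2 * (9 * alpha R opn a ^+ 2 / n ^+ 2).
  rewrite (bigD1 a) //= big1 ?addr0; first by rewrite Hd eqxx mulr1.
  by move=> i ia; rewrite Hd (negbTE ia) !mulr0 expr0n mul0r.
rewrite E1 E2.
have ta : n^-1 <= alpha R opn a.
  by case: Ha => /alpha_ge_of.
have tm := alpha_max_ge a.
set t := alpha R opn a in ta tm *.
set h := n^-1 in h0 ta *.
have e2 : eps ^+ 2 = 1 by case: heps => ->; rewrite ?expr1n ?sqrrN ?expr1n.
have hh : h ^+ 2 <= t * h by rewrite expr2 ler_pM2r.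
have h2 : 0 <= h ^+ 2 by rewrite sqr_ge0.
have th : 0 <= t * h by rewrite mulr_ge0 // ltW // (lt_le_trans h0 ta).
rewrite e2 mulr1 mul1r.
have hD : `|2 * t * h * eps + h ^+ 2| <= 3 * t * h.
  rewrite ler_norml; case: heps => ->; apply/andP; split; lra.
split.
  rewrite -real_normK ?num_real // -exprVn -/h.
  have -> : 9 * t ^+ 2 * h ^+ 2 = (3 * t * h) * (3 * t * h) by ring.
  by rewrite expr2 ler_pM.
apply: (le_trans hD).
apply: ler_wpM2r; first exact: ltW.
by apply: ler_wpM2l.
Qed.

Lemma Var_bound :
  Varstep opn (fun c => gamma R c) <= 9 * norm3cube R opn / n ^+ 2.
Proof.
rewrite /Varstep.
apply: (le_trans (Estep_var_le (fun c => gamma R c) (gamma R opn))).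
rewrite /Estep.
have hn := n_neq0.
have ip : 0 <= (n ^+ 2)^-1 by rewrite invr_ge0 exprn_ge0 // ltW // n_gt0.
apply: (@le_trans _ _ ((n ^+ 2)^-1 * \sum_u \sum_v \sum_i
     dl i (opn u) (opn v) ^+ 2 * (9 * alpha R opn i ^+ 2 / n ^+ 2))).
  apply: ler_wpM2l => //; apply: ler_sum => u _; apply: ler_sum => v _.
  exact: (D_point u v).1.
under eq_bigr do rewrite exchange_big.
rewrite exchange_big mulr_sumr /norm3cube mulr_sumr mulr_suml.
apply: ler_sum => i _.
under eq_bigr do rewrite -mulr_suml.
rewrite -mulr_suml sum_dl2.
have a0 := alpha_ge0 i.
set a := alpha R opn i.
have -> : (n ^+ 2)^-1 * (n ^+ 2 * (a - a ^+ 2) * (9 * a ^+ 2 / n ^+ 2))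
   = 9 * a ^+ 3 / n ^+ 2 - 9 * a ^+ 4 / n ^+ 2 by field.
rewrite lerBlDr lerDl; apply: divr_ge0; [apply: mulr_ge0 => //; exact: exprn_ge0 | exact: exprn_ge0 (ltW n_gt0)].
Qed.

Lemma Estep_cst (c : R) : Estep opn (fun _ => c) = c.
Proof.
rewrite (@Estep_ext (fun _ => c) (fun x => 0 * (fun _ => 0) x + 0 * (fun _ => 0) x + c)) //.
  by rewrite Estep_lin !mul0r !add0r.
by move=> u v /=; rewrite !mul0r !add0r.
Qed.

Lemma Estep_norm (f : cfg -> R) (B : R) :
  (forall u v, `|f (step opn u v)| <= B) -> `|Estep opn f| <= B.
Proof.
move=> H; rewrite ler_norml; apply/andP; split.
  rewrite -[X in X <= _](Estep_cst (- B)); apply: Estep_le => u v.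
  by have := H u v; rewrite ler_norml => /andP[].
rewrite -[X in _ <= X](Estep_cst B); apply: Estep_le => u v.
by have := H u v; rewrite ler_norml => /andP[].
Qed.

Lemma Bern :
  bernstein_step opn (fun c => gamma R c - Estep opn (fun c => gamma R c))
        (8 * alpha_max R opn / n) (9 * norm3cube R opn / n ^+ 2).
Proof.
move=> lam hl.
set g := fun c : cfg => gamma R c.
set m := Estep opn g.
set am := alpha_max R opn.
have am0 : 0 <= am := alpha_max_ge0.
have hn := n_neq0.
have n0 := n_gt0.
have hm : `|m - gamma R opn| <= 3 * am / n.
  have -> : m - gamma R opn = Estep opn (fun x => 1 * g x + 0 * g x + - gamma R opn).
    by rewrite Estep_lin -/m; ring.
  apply: Estep_norm => u v; rewrite mul1r mul0r addr0.
  exact: (D_point u v).2.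
have hX : forall u v, `|g (step opn u v) - m| <= 6 * am / n.
  move=> u v; apply: (le_trans (ler_distD (gamma R opn) _ _)).
  rewrite distrC in hm.
  have := (D_point u v).2; rewrite -/g => h1.
  have -> : 6 * am / n = 3 * am / n + 3 * am / n by field.
  exact: lerD.
set c := `|lam| * (8 * am / n) in hl *.
have c0 : 0 <= c by rewrite mulr_ge0 // divr_ge0 ?mulr_ge0 // ltW.
have pos : 0 < 1 - c / 3 by lra.
set K := lam ^+ 2 / (2 * (1 - c / 3)).
have K0 : 0 <= K by rewrite divr_ge0 ?sqr_ge0 // mulr_ge0 // ltW.
have pw : forall u v, expR (lam * (g (step opn u v) - m)) <=
    lam * (g (step opn u v) - m) + K * (g (step opn u v) - m) ^+ 2 + 1.
  move=> u v; set x := g (step opn u v) - m.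
  have hx : `|lam * x| <= c.
    rewrite normrM /c; apply: ler_wpM2l => //.
    apply: (le_trans (hX u v)); apply: ler_wpM2r; first by rewrite invr_ge0 ltW.
    lra.
  apply: (le_trans (@expR_bound _ _ (le_lt_trans hx hl))).
  suff : (lam * x) ^+ 2 / (2 * (1 - `|lam * x| / 3)) <= K * x ^+ 2 by lra.
  have AB : (2 * (1 - `|lam * x| / 3))^-1 <= (2 * (1 - c / 3))^-1.
    rewrite lef_pV2 ?posrE ?mulr_gt0 //; last by lra.
    by rewrite ler_wpM2l //; lra.
  have P : 0 <= lam ^+ 2 * x ^+ 2 by rewrite mulr_ge0 ?sqr_ge0.
  rewrite /K exprMn.
  set A := (2 * (1 - `|lam * x| / 3))^-1 in AB *.
  set B := (2 * (1 - c / 3))^-1 in AB *.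
  rewrite -mulrA [B * _]mulrC mulrA.
  nra.
apply: (le_trans (@Estep_le (fun c => expR (lam * (g c - m)))
   (fun c => lam * (g c - m) + K * (g c - m) ^+ 2 + 1) pw)).
rewrite Estep_lin.
have -> : Estep opn (fun c => g c - m) = 0.
  rewrite (@Estep_ext _ (fun x => 1 * g x + 0 * g x + - m)); last by move=> u v; ring.
  by rewrite Estep_lin -/m; ring.
have -> : Estep opn (fun c => (g c - m) ^+ 2) = Varstep opn g by [].
set s := 9 * norm3cube R opn / n ^+ 2.
apply: (@le_trans _ _ (K * s + 1)).
  by rewrite mulr0 add0r lerD2r ler_wpM2l // Var_bound.
have -> : lam ^+ 2 * s / 2 / (1 - c / 3) = K * s.
  by rewrite /K; field; rewrite subr_eq0 gt_eqF.
by rewrite addrC expR_ge1Dx.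
Qed.
End Comb.

Theorem mainTheorem13 (R : realType) (V : finType) (k : nat)
    (opn : {ffun V -> opinion k}) :
  (0 < #|V|)%N ->
  let n : R := nV R V in
  let g := fun c : {ffun V -> opinion k} => gamma R c in
  [/\ Estep opn g =
        gamma R opn
        + 2 / n * ((1 - 2 * beta R opn) * gamma R opn + norm3cube R opn)
        + (beta R opn - gamma R opn) / n ^+ 2,
      Varstep opn g <= 9 * norm3cube R opn / n ^+ 2
    & bernstein_step opn (fun c => g c - Estep opn g)
        (8 * alpha_max R opn / n) (9 * norm3cube R opn / n ^+ 2)].
Proof.
move=> hV n g; split.
- exact: (@Estep_gamma R V k opn hV).
- exact: (@Var_bound R V k opn hV).
- exact: (@Bern R V k opn hV).
Qed.
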